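(* Let $X,Y$ be compact topological spaces, $\mu\in\mathcal{P}(X)$, $\nu\in\mathcal{P}(Y)$, $c\in C(X\times Y)$. For every $u_0\in C(X)$, the sequence $u_m:=S^m(u_0)$ converges uniformly on $X$ to a fixed point $u_\infty$ of $S$.
   Context: For $u\in C(X)$ set $v[u](y)=\log\int_Xe^{-c(x,y)-u(x)}d\mu(x)$, and for $v\in C(Y)$ set $u[v](x)=\log\int_Ye^{-c(x,y)-v(y)}d\nu(y)$. $S:C(X)\to C(X)$ is $S(u)=u[v[u]]$ (an infinite-dimensional form of the Sinkhorn / iterative proportional fitting iteration). *)

(* Defs.v *)
From HB Require Import structures.
From mathcomp Require Import all_boot all_order all_algebra.
From mathcomp Require Import all_classical all_reals all_analysis.
Import numFieldNormedType.Exports.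
Set Implicit Arguments. Unset Strict Implicit. Unset Printing Implicit Defensive.
Import Order.TTheory GRing.Theory Num.Theory.
Local Open Scope classical_set_scope.
Local Open Scope ring_scope.

Definition borel (X : ptopologicalType) := g_sigma_algebraType (@open X).

Definition vfun (R : realType) (X Y : ptopologicalType)
  (mu : probability (borel X) R) (c : X * Y -> R) (u : X -> R) : Y -> R :=
  fun y => ln (Rintegral mu setT (fun x : borel X => expR (- c (x, y) - u x))).

Definition ufun (R : realType) (X Y : ptopologicalType)
  (nu : probability (borel Y) R) (c : X * Y -> R) (v : Y -> R) : X -> R :=
  fun x => ln (Rintegral nu setT (fun y : borel Y => expR (- c (x, y) - v y))).

Definition Sink (R : realType) (X Y : ptopologicalType)
  (mu : probability (borel X) R) (nu : probability (borel Y) R)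
  (c : X * Y -> R) (u : X -> R) : X -> R :=
  ufun nu c (vfun mu c u).

(* Main.v *)
Require Import Defs.
From HB Require Import structures.
From mathcomp Require Import all_boot all_order all_algebra.
From mathcomp Require Import all_classical all_reals all_analysis.
From mathcomp Require Import ring lra.
From mathcomp Require Import finmap.
Import numFieldNormedType.Exports.
Import Order.TTheory GRing.Theory Num.Theory.
Local Open Scope classical_set_scope.
Local Open Scope ring_scope.

Set Implicit Arguments. Unset Strict Implicit. Unset Printing Implicit Defensive.
Section Basic.
Variable R : realType.

Lemma cont_meas (T : ptopologicalType) (f : T -> R) :
  continuous f -> measurable_fun [set: borel T] (f : borel T -> R).
Proof.
move=> /continuousP cf; apply: (measurability _ (measurable_realfun.RGenOpens.measurableE R)).
move=> _ [_ [a [b ->] <-]]; rewrite setTI; apply: sub_sigma_algebra.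
exact/cf/interval_open.
Qed.

Lemma cont_bdd (T : topologicalType) (f : T -> R) :
  compact [set: T] -> continuous f -> exists M, forall t, `|f t| <= M.
Proof.
move=> cT cf.
have : compact (f @` [set: T]).
  by apply: continuous_compact => //; exact: continuous_subspaceT.
move=> /compact_bounded [M [_ HM]].
exists (`|M| + 1) => t; apply: (HM (`|M| + 1)); last by exists t.
by rewrite (le_lt_trans (ler_norm M)) // ltrDl.
Qed.

Lemma cont_int (T : ptopologicalType) (P : probability (borel T) R) (f : T -> R)
  (D : set (borel T)) :
  compact [set: T] -> continuous f -> measurable D -> P.-integrable D (EFin \o f).
Proof.
move=> cT cf mD; apply: measurable_bounded_integrable => //.
- by rewrite (le_lt_trans (probability_le1 P mD)) // ltry.
- exact: measurable_funS (cont_meas cf).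
- have [M HM] := cont_bdd cT cf.
  exists M; split; first exact: num_real.
  by move=> N MN x _ /=; rewrite (le_trans (HM x)) // ltW.
Qed.

End Basic.

Section Cont.
Variable R : realType.
Variable T : topologicalType.
Implicit Types f g : T -> R.

Lemma ccst (r : R) : continuous (fun _ : T => r).
Proof. by move=> x; exact: cvg_cst. Qed.
Lemma cD f g : continuous f -> continuous g -> continuous (fun x => f x + g x).
Proof. by move=> hf hg x; exact: (continuousD (hf x) (hg x)). Qed.
Lemma cB f g : continuous f -> continuous g -> continuous (fun x => f x - g x).
Proof. by move=> hf hg x; exact: (continuousB (hf x) (hg x)). Qed.
Lemma cN f : continuous f -> continuous (fun x => - f x).
Proof. by move=> hf x; exact: (continuousN (hf x)). Qed.
Lemma cM f g : continuous f -> continuous g -> continuous (fun x => f x * g x).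
Proof. by move=> hf hg x; exact: (continuousM (hf x) (hg x)). Qed.
Lemma cexp f : continuous f -> continuous (fun x => expR (f x)).
Proof. by move=> hf x; apply: (continuous_comp (hf x)); exact: continuous_expR. Qed.
Lemma cnorm f : continuous f -> continuous (fun x => `|f x|).
Proof. by move=> hf x; apply: (continuous_comp (hf x)); exact: norm_continuous. Qed.
Lemma cln f : (forall x, 0 < f x) -> continuous f -> continuous (fun x => ln (f x)).
Proof. by move=> pf hf x; apply: (continuous_comp (hf x)); exact: continuous_ln. Qed.
End Cont.

Section Cont2.
Variable R : realType.
Lemma cont_sect (A B : topologicalType) (G : A * B -> R) (t : A) :
  continuous G -> continuous (fun s => G (t, s)).
Proof.
move=> cG s; apply: (@continuous_comp _ _ _ (fun s => (t, s)) G).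
  by apply: cvg_pair; [exact: cvg_cst | exact: cvg_id].
exact: cG.
Qed.
Lemma cont_swap (A B : topologicalType) (G : A * B -> R) :
  continuous G -> continuous (fun p : B * A => G (p.2, p.1)).
Proof.
move=> cG p; apply: (@continuous_comp _ _ _ (fun p : B * A => (p.2, p.1)) G).
  by apply: cvg_pair; [exact: cvg_snd | exact: cvg_fst].
exact: cG.
Qed.
Lemma cont_fst (A B : topologicalType) (f : A -> R) :
  continuous f -> continuous (fun p : A * B => f p.1).
Proof.
move=> cf p; apply: (@continuous_comp _ _ _ fst f); first exact: cvg_fst.
exact: cf.
Qed.
Lemma cont_snd (A B : topologicalType) (f : B -> R) :
  continuous f -> continuous (fun p : A * B => f p.2).
Proof.
move=> cf p; apply: (@continuous_comp _ _ _ snd f); first exact: cvg_snd.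
exact: cf.
Qed.
End Cont2.

Set Implicit Arguments. Unset Strict Implicit. Unset Printing Implicit Defensive.
Section Tube.
Variable R : realType.

Lemma tube (A B : topologicalType) (G : A * B -> R) :
  compact [set: B] -> continuous G -> forall (t0 : A) (e : R), 0 < e ->
  \forall t \near t0, forall s, `|G (t, s) - G (t0, s)| < e.
Proof.
move=> cB cG t0 e e0.
have H := proj1 (compact_near_coveringP [set: B]) cB A (nbhs t0)
  (fun t s => `|G (t, s) - G (t0, s)| < e) _.
have : \forall t \near t0, [set: B] `<=` (fun s => `|G (t, s) - G (t0, s)| < e).
  apply: H => s _.
  have := cG (t0, s); move/cvgrPdist_lt => /(_ (e / 2)).
  rewrite divr_gt0 // => /(_ isT).
  case=> [[P1 P2] [P1t0 P2s] sub].
  exists (P2, P1) => //= -[s' t] [/= P2s' P1t].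
  have h1 := sub (t, s') (conj P1t P2s').
  have h2 := sub (t0, s') (conj (nbhs_singleton P1t0) P2s').
  rewrite /= in h1 h2.
  rewrite (le_lt_trans (ler_distD (G (t0, s)) _ _)) //.
  by rewrite (splitr e) ltrD // distrC.
by apply: filterS => t Ht s; exact: Ht.
Qed.

End Tube.

Section Integ.
Variable R : realType.
Variables (T : ptopologicalType) (hT : compact [set: T]) (P : probability (borel T) R).
Implicit Types (f g : T -> R) (D : set (borel T)).

Definition pm D := fine (P D).

Lemma pm_ge0 D : 0 <= pm D.
Proof. by rewrite /pm fine_ge0. Qed.
Lemma pm_le1 D : measurable D -> pm D <= 1.
Proof.
move=> mD; rewrite /pm -lee_fin fineK ?probability_le1 //.
by rewrite ge0_fin_numE // (le_lt_trans (probability_le1 P mD)) // ltry.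
Qed.
Lemma pmT : pm [set: T] = 1.
Proof. by rewrite /pm probability_setT. Qed.

Lemma IB D f g : measurable D -> continuous f -> continuous g ->
  Rintegral P D (fun x => f x - g x) = Rintegral P D f - Rintegral P D g.
Proof. by move=> mD cf cg; apply: RintegralB => //; exact: cont_int. Qed.
Lemma ID D f g : measurable D -> continuous f -> continuous g ->
  Rintegral P D (fun x => f x + g x) = Rintegral P D f + Rintegral P D g.
Proof. by move=> mD cf cg; apply: RintegralD => //; exact: cont_int. Qed.
Lemma IZ D f r : measurable D -> continuous f ->
  Rintegral P D (fun x => r * f x) = r * Rintegral P D f.
Proof. by move=> mD cf; apply: RintegralZl => //; exact: cont_int. Qed.
Lemma Ile D f g : measurable D -> continuous f -> continuous g ->
  (forall x, D x -> f x <= g x) -> Rintegral P D f <= Rintegral P D g.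
Proof. by move=> mD cf cg fg; apply: le_Rintegral => //; exact: cont_int. Qed.
Lemma Icst D r : measurable D -> Rintegral P D (fun _ => r) = r * pm D.
Proof. by move=> mD; rewrite Rintegral_cst. Qed.
Lemma Ibound D f r : measurable D -> continuous f ->
  (forall x, D x -> `|f x| <= r) -> `|Rintegral P D f| <= r * pm D.
Proof.
move=> mD cf fr; rewrite (le_trans (le_normr_Rintegral _ _)) //.
  exact: cont_int.
rewrite -Icst //; apply: Ile => //; [exact: cnorm | exact: ccst].
Qed.
Lemma Ibound2 D f g r : measurable D -> continuous f -> continuous g ->
  (forall x, D x -> `|f x - g x| <= r) ->
  `|Rintegral P D f - Rintegral P D g| <= r * pm D.
Proof.
by move=> mD cf cg fr; rewrite -IB //; apply: Ibound => //; exact: cB.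
Qed.
End Integ.

Section Param.
Variable R : realType.

Lemma param_cont (A B : ptopologicalType) (P : probability (borel B) R)
  (G : A * B -> R) (D : set (borel B)) :
  compact [set: B] -> continuous G -> measurable D ->
  continuous (fun t => Rintegral P D (fun s => G (t, s))).
Proof.
move=> cB cG mD t0; apply/cvgrPdist_lt => e e0.
have := @tube _ _ _ G cB cG t0 (e / 2); rewrite divr_gt0 // => /(_ isT).
apply: filterS => t Ht.
rewrite (le_lt_trans (Ibound2 cB P mD (cont_sect (t := t0) cG) (cont_sect (t := t) cG) (r := e / 2) _)) //.
  by move=> s _; rewrite distrC ltW.
have h1 := pm_le1 P mD; have h2 := pm_ge0 P D.
nra.
Qed.
End Param.

Set Implicit Arguments. Unset Strict Implicit. Unset Printing Implicit Defensive.
Section Op.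
Variable R : realType.
Variables (A B : ptopologicalType) (hA : compact [set: A]) (hB : compact [set: B]).
Variables (P : probability (borel B) R) (G : A * B -> R) (cG : continuous G).

Definition Op (f : B -> R) (t : A) :=
  ln (Rintegral P setT (fun s => expR (- G (t, s) - f s))).

Lemma GbddAB : exists C, forall p, `|G p| <= C.
Proof.
apply: cont_bdd => //; rewrite -setXTT; exact: compact_setX.
Qed.

Lemma cint_f (f : B -> R) t : continuous f ->
  continuous (fun s => expR (- G (t, s) - f s)).
Proof. by move=> cf; apply: cexp; apply: cB => //; apply: cN; exact: cont_sect. Qed.

Lemma Iexp_pos (f : B -> R) t : continuous f ->
  0 < Rintegral P setT (fun s => expR (- G (t, s) - f s)).
Proof.
move=> cf; have [C hC] := GbddAB; have [M hM] := cont_bdd hB cf.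
apply: (@lt_le_trans _ _ (expR (- C - M))); first exact: expR_gt0.
rewrite -[X in X <= _]mulr1 -(pmT P) -Icst //.
apply: Ile => //; first exact: ccst; first exact: cint_f.
move=> s _; rewrite ler_expR lerB // ?lerN2.
  by have := hC (t, s); rewrite ler_norml => /andP[].
by have := hM s; rewrite ler_norml => /andP[].
Qed.

Lemma Op_cont (f : B -> R) : continuous f -> continuous (Op f).
Proof.
move=> cf; rewrite /Op; apply: cln; first by move=> t; exact: Iexp_pos.
have := @param_cont R A B P (fun p => expR (- G p - f p.2)) setT hB.
apply => //; apply: cexp; apply: cB; first exact: cN.
exact: cont_snd.
Qed.

Lemma Op_contr : exists th : R, 0 < th /\ th <= 1 /\
  forall (f1 f2 : B -> R) (a b : R), continuous f1 -> continuous f2 ->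
  (forall s, a <= f1 s - f2 s <= b) ->
  exists a' b', -b <= a' /\ b' <= -a /\
   (forall t, a' <= Op f1 t - Op f2 t <= b') /\
   expR (b' - a') - 1 <= (1 - th) * (expR (b - a) - 1).
Proof.
have [C hC] := GbddAB.
have C0 : 0 <= C by rewrite (le_trans _ (hC point)).
pose rho := expR (- (C + C)).
have rho0 : 0 < rho by exact: expR_gt0.
have rho1 : rho <= 1 by rewrite /rho -expR0 ler_expR; lra.
exists (rho * rho); split; first exact: mulr_gt0.
split; first by nra.
move=> f1 f2 a b cf1 cf2 hab.
pose I := Rintegral P setT.
pose h t s := expR (- G (t, s) - f2 s).
pose g s := expR (- (f1 s - f2 s)).
pose N t := I (fun s => expR (- G (t, s) - f1 s)).
pose D t := I (h t).
have ch t : continuous (h t) by exact: (@cint_f f2 t cf2).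
have cg : continuous g by apply: cexp; apply: cN; exact: cB.
have Dpos t : 0 < D t by exact: (@Iexp_pos f2 t cf2).
have Npos t : 0 < N t by exact: (@Iexp_pos f1 t cf1).
have eqN t : N t = I (fun s => h t s * g s).
  apply: eq_Rintegral => s _; rewrite /h /g -expRD; congr expR; lra.
have Nlo t : expR (- b) * D t <= N t.
  rewrite eqN /D /I -IZ //; apply: Ile => //.
  - by apply: cM => //; exact: ccst.
  - exact: cM.
  move=> s _; rewrite mulrC ler_wpM2l ?(ltW (expR_gt0 _)) // /g ler_expR.
  by have := hab s; lra.
have Nhi t : N t <= expR (- a) * D t.
  rewrite eqN /D /I -IZ //; apply: Ile => //.
  - exact: cM.
  - by apply: cM => //; exact: ccst.
  move=> s _; rewrite mulrC ler_wpM2r ?(ltW (expR_gt0 _)) // /g ler_expR.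
  by have := hab s; lra.
have hcomp t t' s : rho * h t' s <= h t s.
  rewrite /rho /h -expRD ler_expR.
  have := hC (t, s); have := hC (t', s); rewrite !ler_norml => /andP[? ?] /andP[? ?].
  lra.
have Dcomp t t' : rho * D t' <= D t.
  rewrite /D /I -IZ //; apply: Ile => //.
  by apply: cM => //; exact: ccst.
have key t t' : N t <= expR (- a) * (D t - rho * D t') + rho * N t'.
  have -> : expR (- a) * (D t - rho * D t') + rho * N t' =
     I (fun s => expR (- a) * (h t s - rho * h t' s) + rho * (h t' s * g s)).
    rewrite /I ID //; last 2 first.
    - by apply: cM; [exact: ccst | apply: cB => //; apply: cM => //; exact: ccst].
    - by apply: cM; [exact: ccst | exact: cM].
    rewrite IZ //; last by apply: cB => //; apply: cM => //; exact: ccst.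
    rewrite IZ //; last exact: cM.
    rewrite IB //; last by apply: cM => //; exact: ccst.
    by rewrite IZ // eqN.
  rewrite eqN /I; apply: Ile => //; first exact: cM.
    apply: cD; first by apply: cM; [exact: ccst | apply: cB => //; apply: cM => //; exact: ccst].
    by apply: cM; [exact: ccst | exact: cM].
  move=> s _.
  have g1 : g s <= expR (- a) by rewrite /g ler_expR; have := hab s; lra.
  have hh := hcomp t t' s.
  have g0 : 0 <= g s by exact: ltW (expR_gt0 _).
  have h0 : 0 <= h t' s by exact: ltW (expR_gt0 _).
  nra.
pose E t := N t / D t.
have NE t : N t = E t * D t by rewrite /E divfK // gt_eqF.
have ea0 : 0 < expR (- a) by exact: expR_gt0.
have eb0 : 0 < expR (- b) by exact: expR_gt0.
have Elo t : expR (- b) <= E t.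
  by rewrite /E ler_pdivlMr //; exact: Nlo.
have Ehi t : E t <= expR (- a).
  by rewrite /E ler_pdivrMr //; exact: Nhi.
have Ekey t t' : E t <= (1 - rho * rho) * expR (- a) + rho * rho * E t'.
  have k := key t t'; rewrite !NE in k.
  have d1 := Dcomp t' t.
  have p1 : 0 <= (expR (- a) - E t') * (D t' - rho * D t).
    by apply: mulr_ge0; [have := Ehi t'; lra | lra].
  have Dt := Dpos t.
  suff : E t * D t <= ((1 - rho * rho) * expR (- a) + rho * rho * E t') * D t.
    by rewrite ler_pM2r.
  nra.
pose s0 := inf (range E).
have ne : range E !=set0 by exists (E point); exists point.
have lb : has_lbound (range E) by exists (expR (- b)) => _ [t _ <-].
have s0lo : expR (- b) <= s0 by apply: lb_le_inf => // _ [t _ <-].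
have s0le t : s0 <= E t by apply: ge_inf => //; exists t.
have s00 : 0 < s0 by exact: lt_le_trans s0lo.
have th0 : 0 < rho * rho by exact: mulr_gt0.
have s0key t : E t <= (1 - rho * rho) * expR (- a) + rho * rho * s0.
  have : (E t - (1 - rho * rho) * expR (- a)) / (rho * rho) <= s0.
    apply: lb_le_inf => // _ [t' _ <-].
    rewrite ler_pdivrMr //; have := Ekey t t'; lra.
  rewrite ler_pdivrMr //; lra.
have s0ea : s0 <= expR (- a) by exact: le_trans (s0le point) (Ehi point).
have q0 : 0 < (1 - rho * rho) * expR (- a) + rho * rho * s0.
  have : 0 <= 1 - rho * rho by nra.
  nra.
exists (ln s0), (ln ((1 - rho * rho) * expR (- a) + rho * rho * s0)).
split.
  by rewrite -[X in X <= _]expRK ler_ln ?posrE.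
split.
  rewrite -[X in _ <= X]expRK ler_ln ?posrE //.
  have : 0 <= 1 - rho * rho by nra.
  nra.
split.
  move=> t; rewrite /Op -/(N t) -/(D t) -/I.
  have -> : ln (N t) - ln (D t) = ln (E t).
    by rewrite NE lnM ?posrE // ?addrK // (lt_le_trans eb0 (Elo t)).
  have Et0 : 0 < E t by exact: lt_le_trans eb0 (Elo t).
  by rewrite !ler_ln ?posrE // s0le s0key.
rewrite (expRB (ln _)) !lnK ?posrE //.
rewrite -[expR (b - a)]/(expR (b + - a)) expRD.
have -> : expR b = (expR (- b))^-1 by rewrite expRN invrK.
set ea := expR (- a); set eb := expR (- b).
have h1 : ea / s0 <= ea / eb.
  by rewrite ler_pdivrMr // mulrAC ler_pdivlMr // ler_wpM2l // ltW.
have -> : ((1 - rho * rho) * ea + rho * rho * s0) / s0 - 1 =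
   (1 - rho * rho) * (ea / s0 - 1).
  by field; rewrite gt_eqF.
apply: ler_wpM2l; first nra.
rewrite [eb^-1 * ea]mulrC; lra.
Qed.

End Op.

Set Implicit Arguments. Unset Strict Implicit. Unset Printing Implicit Defensive.
Unset Implicit Arguments.
Section Fub.
Variable R : realType.
Variables (X Y : ptopologicalType) (hX : compact [set: X]) (hY : compact [set: Y]).
Variables (mu : probability (borel X) R) (nu : probability (borel Y) R).
Variables (F : X * Y -> R) (cF : continuous F).

Let Phi x := Rintegral nu setT (fun y => F (x, y)).
Let Psi (D : set X) y := Rintegral mu D (fun x => F (x, y)).

Let cPhi : continuous Phi.
Proof. exact: (@param_cont R X Y nu F setT hY cF). Qed.
Let cPsi (D : set X) : measurable (D : set (borel X)) -> continuous (Psi D).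
Proof.
move=> mD; exact: (@param_cont R Y X mu (fun p => F (p.2, p.1)) D hX (cont_swap cF) mD).
Qed.
Let cFx y : continuous (fun x => F (x, y)).
Proof. exact: (cont_sect (t := y) (cont_swap cF)). Qed.
Let cFy x : continuous (fun y => F (x, y)).
Proof. exact: (cont_sect (t := x) cF). Qed.

Lemma pmU (D1 D2 : set (borel X)) : measurable D1 -> measurable D2 ->
  [disjoint D1 & D2] -> pm mu (D1 `|` D2) = pm mu D1 + pm mu D2.
Proof.
move=> m1 m2 dj.
rewrite -[pm mu (_ `|` _)]mul1r -[pm mu D1]mul1r -[pm mu D2]mul1r.
rewrite -!Icst //; last exact: measurableU.
apply: Rintegral_setU => //; apply: cont_int => //; first exact: ccst.
exact: measurableU.
Qed.

Lemma fub_step (e : R) (U : X -> set X) (s : seq X) (D : set X) :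
  (forall p, open (U p)) ->
  (forall p x, U p x -> forall y, `|F (x, y) - F (p, y)| <= e) ->
  measurable (D : set (borel X)) ->
  D `<=` (fun x => exists2 p, p \in s & U p x) ->
  `| Rintegral mu D Phi - Rintegral nu setT (Psi D) | <= (e + e) * pm mu D.
Proof.
move=> oU hU; elim: s D => [|p s IH] D mD Ds.
  have -> : D = set0 by apply/seteqP; split => // x /Ds [].
  rewrite Rintegral_set0.
  have -> : Rintegral nu setT (Psi set0) = 0.
    rewrite (@eq_Rintegral _ _ _ nu setT (fun=> 0)); first by rewrite Rintegral_cst ?mul0r.
    by move=> y _; rewrite /Psi Rintegral_set0.
  by rewrite subrr normr0 /pm measure0 mulr0.
pose D1 := D `&` U p; pose D2 := D `&` ~` U p.
have mU : measurable (U p : set (borel X)) by apply: sub_sigma_algebra; exact: oU.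
have m1 : measurable (D1 : set (borel X)) by exact: measurableI.
have m2 : measurable (D2 : set (borel X)) by apply: measurableI => //; exact: measurableC.
have dj : [disjoint D1 & D2].
  by apply/disj_setPS => x [[_ ?] [_ ?]].
have eD : D = D1 `|` D2 by rewrite -setIUr setUCr setIT.
have IH2 := IH D2 m2.
have {IH2} IH2 : `| Rintegral mu D2 Phi - Rintegral nu setT (Psi D2) | <= (e + e) * pm mu D2.
  apply: IH2 => x [Dx nU]; have [q] := Ds x Dx; rewrite in_cons => /orP[/eqP -> // | qs Uq].
  by exists q.
have E1 : `| Rintegral mu D1 Phi - Phi p * pm mu D1 | <= e * pm mu D1.
  rewrite -[Phi p * pm mu D1]Icst //; apply: (Ibound2 hX mu m1 cPhi (ccst (r := Phi p))) => x [_ Ux].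
  rewrite /Phi; have := Ibound2 hY nu measurableT (cFy x) (cFy p) (fun y _ => hU p x Ux y).
  by rewrite pmT mulr1.
have E2 : `| Rintegral nu setT (Psi D1) - Phi p * pm mu D1 | <= e * pm mu D1.
  have -> : Phi p * pm mu D1 = Rintegral nu setT (fun y => F (p, y) * pm mu D1).
    by rewrite /Phi RintegralZr //; apply: cont_int => //; exact: cFy.
  have := Ibound2 hY nu measurableT (cPsi D1 m1) (cM (cFy p) (ccst (r := pm mu D1))) (r := e * pm mu D1).
  rewrite pmT mulr1; apply => y _.
  rewrite -[F (p, y) * pm mu D1]Icst //; apply: (Ibound2 hX mu m1 (cFx y) (ccst (r := F (p, y)))) => x [_ Ux].
  exact: hU.
have S1 : Rintegral mu D Phi = Rintegral mu D1 Phi + Rintegral mu D2 Phi.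
  rewrite eD; apply: Rintegral_setU => //; apply: cont_int => //; exact: measurableU.
have S2 : Rintegral nu setT (Psi D) = Rintegral nu setT (Psi D1) + Rintegral nu setT (Psi D2).
  rewrite -ID //; [|exact: cPsi|exact: cPsi].
  apply: eq_Rintegral => y _; rewrite /Psi eD; apply: Rintegral_setU => //.
  by apply: cont_int => //; exact: measurableU.
have S3 : pm mu D = pm mu D1 + pm mu D2 by rewrite eD; exact: pmU.
rewrite S1 S2 S3.
set a1 := Rintegral mu D1 Phi; set a2 := Rintegral mu D2 Phi.
set b1 := Rintegral nu setT (Psi D1); set b2 := Rintegral nu setT (Psi D2).
set c1 := Phi p * pm mu D1.
have -> : a1 + a2 - (b1 + b2) = (a1 - c1) + (c1 - b1) + (a2 - b2) by ring.
rewrite (le_trans (ler_normD _ _)) // (le_trans (lerD (ler_normD _ _) (lexx _))) //.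
rewrite distrC in E2.
have := pm_ge0 mu D1; have := pm_ge0 mu D2.
lra.
Qed.
Lemma fubini_cont : Rintegral mu setT Phi = Rintegral nu setT (Psi setT).
Proof.
suff H : forall e, 0 < e -> `|Rintegral mu setT Phi - Rintegral nu setT (Psi setT)| <= e + e.
  set d := `|_ - _| in H.
  have d0 : 0 <= d by exact: normr_ge0.
  case: (ltP 0 d) => dp.
    have := H (d / 4); rewrite divr_gt0 // => /(_ isT); lra.
  apply/eqP; rewrite -subr_eq0 -normr_eq0 -/d eq_le dp d0 //.
move=> e e0.
pose U p := interior [set x | forall y, `|F (x, y) - F (p, y)| < e].
have oU p : open (U p) by exact: open_interior.
have hU p x : U p x -> forall y, `|F (x, y) - F (p, y)| <= e.
  by move=> /interior_subset /= Ux y; exact: ltW.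
have Upp p : U p p.
  rewrite /U /interior /=.
  exact: (@tube R X Y F hY cF p e e0).
have hX' := hX; rewrite compact_cover in hX'.
have cov0 : [set: X] `<=` cover setT U by move=> x _; exists x => //; exact: Upp.
have [D' _ cov] := hX' X setT U (fun i _ => oU i) cov0.
have := fub_step e U (enum_fset D') setT oU hU measurableT.
rewrite pmT mulr1; apply => x /cov [p Dp Upx]; exists p => //.
Qed.
End Fub.

Set Implicit Arguments. Unset Strict Implicit. Unset Printing Implicit Defensive.
Unset Implicit Arguments.
Section Main.
Variable R : realType.
Variables (X Y : ptopologicalType) (hX : compact [set: X]) (hY : compact [set: Y]).
Variables (mu : probability (borel X) R) (nu : probability (borel Y) R).
Variables (c : X * Y -> R) (hc : continuous c).

Let c' := fun p : Y * X => c (p.2, p.1).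
Let hc' : continuous c'. Proof. exact: cont_swap. Qed.
Let S := Sink mu nu c.

Let SE u : S u = Op nu c (Op mu c' u).
Proof. by []. Qed.

Lemma contS u : continuous u -> continuous (S u).
Proof.
move=> cu; rewrite SE; apply: (Op_cont hX hY hc).
exact: (Op_cont hY hX hc').
Qed.

Lemma stepS : exists th : R, 0 < th /\ th <= 1 /\
  forall (u1 u2 : X -> R) (a b : R), continuous u1 -> continuous u2 ->
  (forall x, a <= u1 x - u2 x <= b) ->
  exists a' b', a <= a' /\ b' <= b /\ (forall x, a' <= S u1 x - S u2 x <= b') /\
   expR (b' - a') - 1 <= (1 - th) * (expR (b - a) - 1).
Proof.
have [th [th0 [th1 H1]]] := Op_contr hY hX mu hc'.
have [th' [_ [_ H2]]] := Op_contr hX hY nu hc.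
exists th; split => //; split => // u1 u2 a b cu1 cu2 hab.
have [a1 [b1 [ha1 [hb1 [hv hW]]]]] := H1 u1 u2 a b cu1 cu2 hab.
have [a2 [b2 [ha2 [hb2 [hw _]]]]] := H2 _ _ a1 b1 (Op_cont hY hX hc' cu1)
  (Op_cont hY hX hc' cu2) hv.
exists a2, b2; split; first lra.
split; first lra.
split; first exact: hw.
apply: le_trans hW; rewrite lerD2r ler_expR; lra.
Qed.

Lemma mass u : continuous u ->
  Rintegral mu setT (fun x => expR (S u x - u x)) = 1.
Proof.
move=> cu.
pose v := Op mu c' u.
have cv : continuous v by exact: (Op_cont hY hX hc').
pose F := fun p : X * Y => expR (- c p - u p.1 - v p.2).
have cF : continuous F.
  apply: cexp; apply: cB; [apply: cB; [exact: cN | exact: cont_fst] | exact: cont_snd].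
have := fubini_cont R X Y hX hY mu nu F cF.
have -> : (fun x => Rintegral nu setT (fun y => F (x, y))) = (fun x => expR (S u x - u x)).
  apply: funext => x.
  have ip := Iexp_pos hX hY nu hc x cv.
  rewrite SE /Op expRB lnK ?posrE // -expRN mulrC -IZ //; last by apply: cint_f.
  apply: eq_Rintegral => y _; rewrite /F /= -expRD; congr expR; rewrite /v /Op; lra.
move=> ->.
rewrite (@eq_Rintegral _ _ _ nu setT (fun _ => 1)) ?Icst ?mul1r ?pmT //.
move=> y _ /=.
have ip := Iexp_pos hY hX mu hc' y cu.
have eI : Rintegral mu setT (fun x => F (x, y)) =
    expR (- v y) * Rintegral mu setT (fun s => expR (- c' (y, s) - u s)).
  rewrite -IZ //; last by apply: cint_f.
  by apply: eq_Rintegral => x _; rewrite /F /= -expRD; congr expR; rewrite /c' /=; lra.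
rewrite eI /v /Op expRN lnK ?posrE // mulVf // gt_eqF //.
Qed.

Lemma sign_lo (u : X -> R) (a : R) : continuous u -> (forall x, a <= S u x - u x) -> a <= 0.
Proof.
move=> cu ha.
have : expR a <= 1.
  rewrite -(mass u cu) -[expR a]mulr1 -(pmT mu) -Icst //; apply: Ile => //.
  - exact: ccst.
  - by apply: cexp; apply: cB => //; exact: contS.
  - by move=> x _; rewrite ler_expR.
by rewrite -expR0 ler_expR.
Qed.

Lemma sign_hi (u : X -> R) (b : R) : continuous u -> (forall x, S u x - u x <= b) -> 0 <= b.
Proof.
move=> cu hb.
have : 1 <= expR b.
  rewrite -(mass u cu) -[expR b]mulr1 -(pmT mu) -Icst //; apply: Ile => //.
  - by apply: cexp; apply: cB => //; exact: contS.
  - exact: ccst.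
  - by move=> x _; rewrite ler_expR.
by rewrite -expR0 ler_expR.
Qed.

Lemma main (u0 : X -> R) (hu0 : continuous u0) : exists uinf : X -> R,
    continuous uinf /\ S uinf = uinf /\
    (forall e : R, 0 < e -> exists N : nat, forall m : nat, (N <= m)%N ->
       forall x : X, `| iter m S u0 x - uinf x | < e).
Proof.
have [th [th0 [th1 HS]]] := stepS.
pose q := 1 - th.
have q0 : 0 <= q by rewrite /q; lra.
have q1 : q < 1 by rewrite /q; lra.
pose u m := iter m S u0.
have uS m : u m.+1 = S (u m) by [].
have cu m : continuous (u m) by elim: m => [|m IH] //; rewrite uS; exact: contS.
have [M0 hM0] := cont_bdd hX (cB (cu 1%N) (cu 0%N)).
have M00 : 0 <= M0 by exact: le_trans (normr_ge0 _) (hM0 point).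
pose W0 := expR (M0 + M0) - 1.
have W00 : 0 <= W0 by rewrite /W0 subr_ge0 -expR0 ler_expR; lra.
have inv m : exists a b, (forall x, a <= u m.+1 x - u m x <= b) /\
    expR (b - a) - 1 <= q ^+ m * W0.
  elim: m => [|m [a [b [hab hW]]]].
    exists (- M0), M0; split; last by rewrite expr0 mul1r /W0 opprK.
    by move=> x; have := hM0 x; rewrite ler_norml.
  have [a' [b' [_ [_ [h' hW']]]]] := HS _ _ a b (cu m.+1) (cu m) hab.
  exists a', b'; split; first exact: h'.
  rewrite exprS -mulrA; apply: le_trans hW' _; apply: ler_wpM2l => //.
have dm m x : `|u m.+1 x - u m x| <= q ^+ m * W0.
  have [a [b [hab hW]]] := inv m.
  have a0 : a <= 0.
    by apply: (sign_lo (u m)) => // y; have /andP[] := hab y.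
  have b0 : 0 <= b.
    by apply: (sign_hi (u m)) => // y; have /andP[] := hab y.
  have := expR_ge1Dx (b - a); have /andP[h1 h2] := hab x.
  move=> he; apply: le_trans hW; rewrite ler_norml; apply/andP; split; lra.
pose K := W0 / th.
have K0 : 0 <= K by rewrite /K divr_ge0 // ltW.
have eK : th * K = W0 by rewrite /K mulrC divfK // gt_eqF.
have sumb m k x : `|u (m + k)%N x - u m x| <= (q ^+ m - q ^+ (m + k)) * K.
  elim: k => [|k IH]; first by rewrite addn0 !subrr normr0 mul0r.
  rewrite addnS exprS.
  set z := q ^+ (m + k).
  have := dm (m + k)%N x; rewrite -/z => hd.
  have e1 : z * W0 = z * K - q * z * K by rewrite -eK /q; ring.
  have := ler_normD (u (m + k).+1 x - u (m + k)%N x) (u (m + k)%N x - u m x).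
  have -> : u (m + k).+1 x - u (m + k)%N x + (u (m + k)%N x - u m x) =
    u (m + k).+1 x - u m x by ring.
  move=> ht; apply: le_trans ht _.
  have : z * W0 + (q ^+ m - z) * K = (q ^+ m - q * z) * K by rewrite e1; ring.
  move=> <-; exact: lerD.
have qmono m n : (m <= n)%N -> q ^+ n <= q ^+ m.
  by move=> mn; apply: (ler_wiXn2l q0) => //; exact: ltW.
pose Ux m x := u m x + q ^+ m * K.
pose Lx m x := u m x - q ^+ m * K.
have mono m n x : (m <= n)%N -> Lx m x <= Lx n x /\ Ux n x <= Ux m x.
  move=> mn; rewrite -(subnKC mn); have := sumb m (n - m)%N x.
  rewrite ler_norml => /andP[h1 h2]; rewrite /Lx /Ux; split; lra.
have LU n x : Lx n x <= Ux n x.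
  rewrite /Lx /Ux; have : 0 <= q ^+ n * K by apply: mulr_ge0 => //; exact: exprn_ge0.
  lra.
pose uinf x := inf (range (fun m => Ux m x)).
have hb m x : `|u m x - uinf x| <= q ^+ m * K.
  have ne : range (fun m => Ux m x) !=set0 by exists (Ux 0%N x); exists 0%N.
  have lb : has_lbound (range (fun m => Ux m x)).
    exists (Lx 0%N x) => _ [n _ <-].
    exact: le_trans (proj1 (mono 0%N n x (leq0n n))) (LU n x).
  have h1 : uinf x <= Ux m x by apply: ge_inf => //; exists m.
  have h2 : Lx m x <= uinf x.
    apply: lb_le_inf => // _ [n _ <-].
    case: (leqP m n) => mn.
      exact: le_trans (proj1 (mono m n x mn)) (LU n x).
    exact: le_trans (LU m x) (proj2 (mono n m x (ltnW mn))).
  rewrite ler_norml; apply/andP; rewrite /Lx /Ux in h1 h2; split; lra.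
have ev e : 0 < e -> exists N, forall m, (N <= m)%N -> q ^+ m * K < e.
  move=> e0.
  have hq : `|q| < 1 by rewrite ger0_norm.
  have := @cvg_expr R q hq; move/cvgrPdist_lt => /(_ (e / (K + 1))).
  rewrite divr_gt0 //; last by lra.
  move=> /(_ isT) [N _ HN]; exists N => m Nm.
  have := HN m Nm; rewrite /= sub0r normrN ger0_norm ?exprn_ge0 //.
  rewrite ltr_pdivlMr; last by lra.
  have : 0 <= q ^+ m by exact: exprn_ge0.
  nra.
have cuinf : continuous uinf.
  move=> x0; apply/cvgrPdist_lt => e e0.
  have [N HN] := ev (e / 3) (divr_gt0 e0 (ltr0n _ 3)).
  have := cu N x0; move/cvgrPdist_lt => /(_ (e / 3)) /(_ (divr_gt0 e0 (ltr0n _ 3))).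
  apply: filterS => x hx.
  have h1 := hb N x0; have h2 := hb N x; have h3 := HN N (leqnn N).
  have := ler_distD (u N x0) (uinf x0) (uinf x).
  have := ler_distD (u N x) (u N x0) (uinf x).
  rewrite distrC in h1.
  lra.
exists uinf; split; first exact: cuinf.
split; last first.
  move=> e e0; have [N HN] := ev e e0; exists N => m Nm x.
  exact: le_lt_trans (hb m x) (HN m Nm).
apply: funext => x.
suff H : forall e, 0 < e -> `|S uinf x - uinf x| <= e + e.
  set d := `|_ - _| in H.
  have d0 : 0 <= d by exact: normr_ge0.
  case: (ltP 0 d) => dp.
    have := H (d / 4); rewrite divr_gt0 // => /(_ isT); lra.
  apply/eqP; rewrite -subr_eq0 -normr_eq0 -/d eq_le dp d0 //.
move=> e e0; have [N HN] := ev e e0.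
have hN := HN N (leqnn N).
have hbd : forall y, - (q ^+ N * K) <= uinf y - u N y <= q ^+ N * K.
  by move=> y; have := hb N y; rewrite distrC ler_norml.
have [a' [b' [ha' [hb' [h' _]]]]] := HS uinf (u N) (- (q ^+ N * K)) (q ^+ N * K)
  cuinf (cu N) hbd.
have := h' x; rewrite -uS => /andP[k1 k2].
have k3 := hb N.+1 x.
have k4 : q ^+ N.+1 * K <= q ^+ N * K.
  by apply: ler_wpM2r => //; apply: qmono.
rewrite ler_norml in k3; have /andP[k5 k6] := k3.
rewrite ler_norml; apply/andP; split; lra.
Qed.

End Main.


Unset Implicit Arguments.
Theorem theorem2p8 (R : realType) (X Y : ptopologicalType)
  (hX : compact [set: X]) (hY : compact [set: Y])
  (mu : probability (borel X) R) (nu : probability (borel Y) R)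
  (c : X * Y -> R) (hc : continuous c)
  (u0 : X -> R) (hu0 : continuous u0) :
  exists uinf : X -> R,
    continuous uinf /\ Sink mu nu c uinf = uinf /\
    (forall e : R, 0 < e -> exists N : nat, forall m : nat, (N <= m)%N ->
       forall x : X, `| iter m (Sink mu nu c) u0 x - uinf x | < e).
Proof. exact: (main R X Y hX hY mu nu c hc u0 hu0). Qed.
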